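(* Let $A_1,\dots,A_n$ be formulae built from variables other than $q$ using only $\cdot$, $\backslash$, $/$. For $i=1,\dots,n$ let $Z_i=([]^{-1}(!A_i\cdot\langle\rangle\langle\rangle q))/q$, and let $$\Phi = !((s/s)/!Z_1),\ !Z_1,\ \dots,\ !((s/s)/!Z_n),\ !Z_n,\ !((s/s)/\langle\rangle\langle\rangle q),\ [[q]].$$ Let $\mathcal{S}$ be either $\mathcal{F}^{\mathrm{mult}}_{2018}$ or $\mathcal{F}^{-,\mathrm{mult}}_{2018}$. Then $\Phi$ internalises $\{A_1,\dots,A_n\}$ in $\mathcal{S}$, that is: (1) the sequent $\Phi,s\to s$ is derivable in $\mathcal{S}$; (2) for every $i$, all sequences of tree terms $\Delta_1,\Delta_2$ and every formula $C$, if $\Phi,\Delta_1,A_i,\Delta_2\to C$ is derivable in $\mathcal{S}$ then so is $\Phi,\Delta_1,\Delta_2\to C$; (3) the sequent $!A_1,\dots,!A_n\to\prod\pi_q(\Phi)$ is derivable in $\mathcal{E}^{\mathrm{mult}}$.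
   Context: $s$ and $q$ are two fixed distinct variables. Formulae are built from a countable set of variables and $\mathbf1$ by $\backslash,/,\cdot$ and the unary $\langle\rangle$, $[]^{-1}$, $!$. Stoup-free bracketed calculus $\mathcal{F}^{\mathrm{mult}}_{2018}$: a tree term is a formula or $[\Xi]$ with $\Xi$ a meta-formula; a meta-formula is a finite sequence of tree terms (empty $\Lambda$); sequents $\Xi\to C$; $\Xi(\Theta)$ designates an occurrence of a meta-formula $\Theta$ which is $\Xi$ itself or the full content of some bracket $[\Theta]$ at any depth. Rules: axioms $A\to A$, $\Lambda\to\mathbf1$; ($/L$) from $\Gamma\to B$ and $\Xi(\Delta_1,C,\Delta_2)\to D$ infer $\Xi(\Delta_1,C/B,\Gamma,\Delta_2)\to D$; ($/R$) from $\Gamma,B\to C$ infer $\Gamma\to C/B$; ($\backslash L$) from $\Gamma\to A$ and $\Xi(\Delta_1,C,\Delta_2)\to D$ infer $\Xi(\Delta_1,\Gamma,A\backslash C,\Delta_2)\to D$; ($\backslash R$) from $A,\Gamma\to C$ infer $\Gamma\to A\backslash C$; ($\cdot L$) from $\Xi(\Delta_1,A,B,\Delta_2)\to D$ infer $\Xi(\Delta_1,A\cdot B,\Delta_2)\to D$; ($\cdot R$) from $\Delta\to A$ and $\Gamma\to B$ infer $\Delta,\Gamma\to A\cdot B$; ($\mathbf1L$) from $\Xi(\Delta_1,\Delta_2)\to A$ infer $\Xi(\Delta_1,\mathbf1,\Delta_2)\to A$; ($[]^{-1}L$) from $\Xi(\Delta_1,A,\Delta_2)\to B$ infer $\Xi(\Delta_1,[[]^{-1}A],\Delta_2)\to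 B$; ($[]^{-1}R$) from $[\Xi]\to A$ infer $\Xi\to[]^{-1}A$; ($\langle\rangle L$) from $\Xi(\Delta_1,[A],\Delta_2)\to B$ infer $\Xi(\Delta_1,\langle\rangle A,\Delta_2)\to B$; ($\langle\rangle R$) from $\Xi\to A$ infer $[\Xi]\to\langle\rangle A$; ($!L$) from $\Xi(\Delta_1,A,\Delta_2)\to C$ infer $\Xi(\Delta_1,!A,\Delta_2)\to C$; ($!P_1$) from $\Xi(\Delta_1,!A,\Phi,\Delta_2)\to C$ infer $\Xi(\Delta_1,\Phi,!A,\Delta_2)\to C$; ($!P_2$) the converse; ($!R$) from $!A\to B$ infer $!A\to!B$; ($!C$) from $\Xi(!A,\Gamma_1,[!A,\Gamma_2],\Gamma_3)\to C$ infer $\Xi(!A,\Gamma_1,[[\Gamma_2]],\Gamma_3)\to C$; (cut) from $\Pi\to A$ and $\Xi(\Gamma_1,A,\Gamma_2)\to C$ infer $\Xi(\Gamma_1,\Pi,\Gamma_2)\to C$. $\mathcal{F}^{-,\mathrm{mult}}_{2018}$ is $\mathcal{F}^{\mathrm{mult}}_{2018}$ restricted to formulae without $\mathbf1$, without $\Lambda\to\mathbf1$ and $\mathbf1L$, with $\backslash R,/R$ only if $\Gamma\neq\Lambda$ and $!C$ only if $\Gamma_2\neq\Lambda$. Bracket-free calculus $\mathcal{E}^{\mathrm{mult}}$: formulae without bracket modalities; sequents $\Pi\to A$, $\Pi$ a finite sequence of formulae; axioms $A\to A$, $\Lambda\to\mathbf1$; standard Lambek rules ($\backslash L$: from $\Pi\to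 A$ and $\Delta_1,B,\Delta_2\to C$ infer $\Delta_1,\Pi,A\backslash B,\Delta_2\to C$; $\backslash R$; $/L$: from $\Pi\to A$ and $\Delta_1,B,\Delta_2\to C$ infer $\Delta_1,B/A,\Pi,\Delta_2\to C$; $/R$; $\cdot L$; $\cdot R$; $\mathbf1L$); ($!R$) from $!A_1,\dots,!A_m\to B$ infer $!A_1,\dots,!A_m\to!B$ ($m\geq0$); ($!L$) from $\Delta_1,A,\Delta_2\to C$ infer $\Delta_1,!A,\Delta_2\to C$; ($!P_{1,2}$) permuting $!A$ with any sequence in either direction; ($!C$) from $\Delta_1,!A,!A,\Delta_2\to C$ infer $\Delta_1,!A,\Delta_2\to C$; ($!W$) from $\Delta_1,\Delta_2\to C$ infer $\Delta_1,!A,\Delta_2\to C$; (cut). The projection $\pi_q$ maps formulae by $\pi_q(q)=\mathbf1$, $\pi_q(p)=p$ for variables $p\ne q$, $\pi_q(\mathbf1)=\mathbf1$, commuting with $\backslash,/,\cdot,!$, and $\pi_q(\langle\rangle A)=\pi_q([]^{-1}A)=\pi_q(A)$; on meta-formulae it is applied elementwise and erases brackets. For a sequence $E_1,\dots,E_k$ of formulae, $\prod(E_1,\dots,E_k)=E_1\cdot\ldots\cdot E_k$. *)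

(* Defs.v *)
From Stdlib Require Import List Bool.
Import ListNotations.
Local Open Scope bool_scope.

(** Formulae of the bracketed calculi. Variables are natural numbers.
    [Under A C] is A\C, [Over C B] is C/B, [Dia A] is <>A,
    [BoxInv A] is []^{-1}A, [Bang A] is !A. *)
Inductive formula : Type :=
| Var (p : nat)
| One
| Under (A C : formula)
| Over (C B : formula)
| Prod (A B : formula)
| Dia (A : formula)
| BoxInv (A : formula)
| Bang (A : formula).

(** Tree terms: a formula, or a bracketed meta-formula [Xi]. *)
Inductive tterm : Type :=
| TF (A : formula)
| TB (l : list tterm).

Definition meta := list tterm.

(** Contexts Xi(_): the hole is either the whole meta-formula or the full
    content of some bracket, at any depth. *)
Inductive ctx : Type :=
| Hole
| InBr (l : meta) (c : ctx) (r : meta).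

Fixpoint fill (c : ctx) (T : meta) : meta :=
  match c with
  | Hole => T
  | InBr l c' r => l ++ TB (fill c' T) :: r
  end.

Fixpoint fonefree (A : formula) : bool :=
  match A with
  | Var _ => true
  | One => false
  | Under A C | Over A C | Prod A C => fonefree A && fonefree C
  | Dia A | BoxInv A | Bang A => fonefree A
  end.

Fixpoint tonefree (t : tterm) : bool :=
  match t with
  | TF A => fonefree A
  | TB l => (fix go (l : list tterm) : bool :=
               match l with
               | [] => true
               | x :: xs => tonefree x && go xs
               end) l
  end.

Definition monefree (l : meta) : bool := forallb tonefree l.

(** In the restricted calculus (m = true) every sequent must be 1-free. *)
Definition wf (m : bool) (G : meta) (C : formula) : Prop :=
  m = true -> monefree G = true /\ fonefree C = true.

(** Derivability in F^mult_2018 (m = false) and F^{-,mult}_2018 (m = true). *)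
Inductive derF (m : bool) : meta -> formula -> Prop :=
| F_ax A :
    wf m [TF A] A -> derF m [TF A] A
| F_one :
    m = false -> derF m [] One
| F_overL G B X D1 C D2 D :
    wf m (fill X (D1 ++ TF (Over C B) :: G ++ D2)) D ->
    derF m G B -> derF m (fill X (D1 ++ TF C :: D2)) D ->
    derF m (fill X (D1 ++ TF (Over C B) :: G ++ D2)) D
| F_overR G B C :
    wf m G (Over C B) -> (m = true -> G <> []) ->
    derF m (G ++ [TF B]) C -> derF m G (Over C B)
| F_underL G A X D1 C D2 D :
    wf m (fill X (D1 ++ G ++ TF (Under A C) :: D2)) D ->
    derF m G A -> derF m (fill X (D1 ++ TF C :: D2)) D ->
    derF m (fill X (D1 ++ G ++ TF (Under A C) :: D2)) D
| F_underR A G C :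
    wf m G (Under A C) -> (m = true -> G <> []) ->
    derF m (TF A :: G) C -> derF m G (Under A C)
| F_prodL X D1 A B D2 D :
    wf m (fill X (D1 ++ TF (Prod A B) :: D2)) D ->
    derF m (fill X (D1 ++ TF A :: TF B :: D2)) D ->
    derF m (fill X (D1 ++ TF (Prod A B) :: D2)) D
| F_prodR D G A B :
    wf m (D ++ G) (Prod A B) ->
    derF m D A -> derF m G B -> derF m (D ++ G) (Prod A B)
| F_oneL X D1 D2 A :
    m = false ->
    derF m (fill X (D1 ++ D2)) A -> derF m (fill X (D1 ++ TF One :: D2)) A
| F_boxinvL X D1 A D2 B :
    wf m (fill X (D1 ++ TB [TF (BoxInv A)] :: D2)) B ->
    derF m (fill X (D1 ++ TF A :: D2)) B ->
    derF m (fill X (D1 ++ TB [TF (BoxInv A)] :: D2)) B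
| F_boxinvR X A :
    wf m X (BoxInv A) ->
    derF m [TB X] A -> derF m X (BoxInv A)
| F_diaL X D1 A D2 B :
    wf m (fill X (D1 ++ TF (Dia A) :: D2)) B ->
    derF m (fill X (D1 ++ TB [TF A] :: D2)) B ->
    derF m (fill X (D1 ++ TF (Dia A) :: D2)) B
| F_diaR X A :
    wf m [TB X] (Dia A) ->
    derF m X A -> derF m [TB X] (Dia A)
| F_bangL X D1 A D2 C :
    wf m (fill X (D1 ++ TF (Bang A) :: D2)) C ->
    derF m (fill X (D1 ++ TF A :: D2)) C ->
    derF m (fill X (D1 ++ TF (Bang A) :: D2)) C
| F_bangP1 X D1 A P D2 C :
    wf m (fill X (D1 ++ P ++ TF (Bang A) :: D2)) C ->
    derF m (fill X (D1 ++ TF (Bang A) :: P ++ D2)) C ->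
    derF m (fill X (D1 ++ P ++ TF (Bang A) :: D2)) C
| F_bangP2 X D1 A P D2 C :
    wf m (fill X (D1 ++ TF (Bang A) :: P ++ D2)) C ->
    derF m (fill X (D1 ++ P ++ TF (Bang A) :: D2)) C ->
    derF m (fill X (D1 ++ TF (Bang A) :: P ++ D2)) C
| F_bangR A B :
    wf m [TF (Bang A)] (Bang B) ->
    derF m [TF (Bang A)] B -> derF m [TF (Bang A)] (Bang B)
| F_bangC X A G1 G2 G3 C :
    wf m (fill X (TF (Bang A) :: G1 ++ TB [TB G2] :: G3)) C ->
    (m = true -> G2 <> []) ->
    derF m (fill X (TF (Bang A) :: G1 ++ TB (TF (Bang A) :: G2) :: G3)) C ->
    derF m (fill X (TF (Bang A) :: G1 ++ TB [TB G2] :: G3)) C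
| F_cut P A X G1 G2 C :
    wf m (fill X (G1 ++ P ++ G2)) C ->
    derF m P A -> derF m (fill X (G1 ++ TF A :: G2)) C ->
    derF m (fill X (G1 ++ P ++ G2)) C.

Inductive eform : Type :=
| EVar (p : nat)
| EOne
| EUnder (A B : eform)
| EOver (B A : eform)
| EProd (A B : eform)
| EBang (A : eform).

Inductive derE : list eform -> eform -> Prop :=
| E_ax A : derE [A] A
| E_one : derE [] EOne
| E_underL P A D1 B D2 C :
    derE P A -> derE (D1 ++ B :: D2) C -> derE (D1 ++ P ++ EUnder A B :: D2) C
| E_underR A P B : derE (A :: P) B -> derE P (EUnder A B)
| E_overL P A D1 B D2 C :
    derE P A -> derE (D1 ++ B :: D2) C -> derE (D1 ++ EOver B A :: P ++ D2) C
| E_overR P A B : derE (P ++ [A]) B -> derE P (EOver B A)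
| E_prodL D1 A B D2 C :
    derE (D1 ++ A :: B :: D2) C -> derE (D1 ++ EProd A B :: D2) C
| E_prodR D G A B : derE D A -> derE G B -> derE (D ++ G) (EProd A B)
| E_oneL D1 D2 A : derE (D1 ++ D2) A -> derE (D1 ++ EOne :: D2) A
| E_bangR As B : derE (map EBang As) B -> derE (map EBang As) (EBang B)
| E_bangL D1 A D2 C : derE (D1 ++ A :: D2) C -> derE (D1 ++ EBang A :: D2) C
| E_bangP1 D1 A P D2 C :
    derE (D1 ++ EBang A :: P ++ D2) C -> derE (D1 ++ P ++ EBang A :: D2) C
| E_bangP2 D1 A P D2 C :
    derE (D1 ++ P ++ EBang A :: D2) C -> derE (D1 ++ EBang A :: P ++ D2) C
| E_bangC D1 A D2 C :
    derE (D1 ++ EBang A :: EBang A :: D2) C -> derE (D1 ++ EBang A :: D2) C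
| E_bangW D1 A D2 C : derE (D1 ++ D2) C -> derE (D1 ++ EBang A :: D2) C
| E_cut P A D1 D2 C :
    derE P A -> derE (D1 ++ A :: D2) C -> derE (D1 ++ P ++ D2) C.

Fixpoint piq (q : nat) (A : formula) : eform :=
  match A with
  | Var p => if Nat.eqb p q then EOne else EVar p
  | One => EOne
  | Under A C => EUnder (piq q A) (piq q C)
  | Over C B => EOver (piq q C) (piq q B)
  | Prod A B => EProd (piq q A) (piq q B)
  | Dia A => piq q A
  | BoxInv A => piq q A
  | Bang A => EBang (piq q A)
  end.

Fixpoint piq_tt (q : nat) (t : tterm) : list eform :=
  match t with
  | TF A => [piq q A]
  | TB l => (fix go (l : list tterm) : list eform :=
               match l with
               | [] => []
               | x :: xs => piq_tt q x ++ go xs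
               end) l
  end.

Definition piq_meta (q : nat) (l : meta) : list eform := concat (map (piq_tt q) l).

(** prod(E_1,...,E_k) = E_1 . (E_2 . ( ... . E_k)) (right-nested; k >= 1 in use). *)
Fixpoint eprod (l : list eform) : eform :=
  match l with
  | [] => EOne
  | [E] => E
  | E :: l' => EProd E (eprod l')
  end.

Inductive lambek_noq (q : nat) : formula -> Prop :=
| lq_var p : p <> q -> lambek_noq q (Var p)
| lq_prod A B : lambek_noq q A -> lambek_noq q B -> lambek_noq q (Prod A B)
| lq_under A B : lambek_noq q A -> lambek_noq q B -> lambek_noq q (Under A B)
| lq_over A B : lambek_noq q A -> lambek_noq q B -> lambek_noq q (Over A B).

Definition Zf (q : nat) (A : formula) : formula :=
  Over (BoxInv (Prod (Bang A) (Dia (Dia (Var q))))) (Var q).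

Definition Phi (s q : nat) (As : list formula) : meta :=
  concat (map (fun A => [TF (Bang (Over (Over (Var s) (Var s)) (Bang (Zf q A))));
                         TF (Bang (Zf q A))]) As)
  ++ [TF (Bang (Over (Over (Var s) (Var s)) (Dia (Dia (Var q)))));
      TB [TB [TF (Var q)]]].

(* Main.v *)
Require Import Defs.
From Stdlib Require Import List Bool Arith.
Import ListNotations.
Lemma der_eq m G G' C : G' = G -> derF m G C -> derF m G' C.
Proof. intros ->; auto. Qed.
Lemma der_eqE G G' C : G' = G -> derE G C -> derE G' C.
Proof. intros ->; auto. Qed.

Lemma lnq_one q A : lambek_noq q A -> fonefree A = true.
Proof. induction 1; simpl; rewrite ?IHlambek_noq1, ?IHlambek_noq2; auto. Qed.

Lemma phi_one s q As : Forall (lambek_noq q) As -> forallb tonefree (Phi s q As) = true.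
Proof.
  induction 1; [reflexivity|].
  apply lnq_one in H. unfold Phi in *. simpl. unfold Zf. simpl. rewrite H. simpl. exact IHForall.
Qed.

Ltac wf1 := let Hm := fresh in intro Hm; subst; unfold monefree, Zf in *; simpl;
  repeat progress (rewrite ?forallb_app; simpl); split;
  repeat (apply andb_true_intro; split); try assumption; try reflexivity.

Lemma part1 m s q As : Forall (lambek_noq q) As -> derF m (Phi s q As ++ [TF (Var s)]) (Var s).
Proof.
  induction 1.
  - refine (der_eq _ _ _ _ _ (F_bangL m Hole [] (Over (Over (Var s) (Var s)) (Dia (Dia (Var q)))) [TB [TB [TF (Var q)]]; TF (Var s)] _ _ _)).
    reflexivity. wf1.
    refine (der_eq _ _ _ _ _ (F_overL m [TB [TB [TF (Var q)]]] (Dia (Dia (Var q))) Hole [] (Over (Var s) (Var s)) [TF (Var s)] _ _ _ _)).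
    reflexivity. wf1.
    + apply F_diaR. wf1. apply F_diaR. wf1. apply F_ax. wf1.
    + refine (der_eq _ _ _ _ _ (F_overL m [TF (Var s)] (Var s) Hole [] (Var s) [] _ _ _ _)).
      reflexivity. wf1. apply F_ax; wf1. apply F_ax; wf1.
  - pose proof (lnq_one _ _ H) as HA. pose proof (phi_one s _ _ H0) as HP.
    set (Z := Zf q x). set (R := Phi s q l ++ [TF (Var s)]).
    refine (der_eq _ _ _ _ _ (F_bangL m Hole [] (Over (Over (Var s) (Var s)) (Bang Z)) (TF (Bang Z) :: R) _ _ _)).
    reflexivity. subst Z R; wf1.
    refine (der_eq _ _ _ _ _ (F_overL m [TF (Bang Z)] (Bang Z) Hole [] (Over (Var s) (Var s)) R _ _ _ _)).
    reflexivity. subst Z R; wf1.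
    apply F_ax; subst Z R; wf1.
    refine (der_eq _ _ _ _ _ (F_overL m R (Var s) Hole [] (Var s) [] _ _ _ _)).
    simpl; rewrite app_nil_r; reflexivity. subst Z R; wf1.
    exact IHForall.
    apply F_ax; wf1.
Qed.

Lemma piq_ne s q As : exists e l, piq_meta q (Phi s q As) = e :: l.
Proof. destruct As; do 2 eexists; reflexivity. Qed.

Lemma part3 s q As :
  derE (map (fun A => EBang (piq q A)) As) (eprod (piq_meta q (Phi s q As))).
Proof.
  assert (Hq : piq q (Var q) = EOne) by (simpl; rewrite Nat.eqb_refl; reflexivity).
  set (S := piq q (Var s)).
  assert (HY : forall W, derE [W; S] S -> derE [] (EBang (EOver (EOver S S) W))).
  { intros W HW. apply (E_bangR []). simpl. apply E_overR. simpl. apply E_overR. simpl. exact HW. }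
  induction As as [|A As IH].
  - change (derE [] (EProd (EBang (EOver (EOver S S) (piq q (Var q)))) (piq q (Var q)))).
    rewrite Hq. refine (der_eqE _ _ _ _ (E_prodR [] [] _ _ _ _)). reflexivity.
    apply HY. refine (der_eqE _ _ _ _ (E_oneL [] [S] _ _)). reflexivity. apply E_ax. apply E_one.
  - destruct (piq_ne s q As) as (e & l & He).
    change (derE (EBang (piq q A) :: map (fun A => EBang (piq q A)) As)
      (eprod (EBang (EOver (EOver S S) (EBang (piq q (Zf q A)))) :: EBang (piq q (Zf q A)) :: piq_meta q (Phi s q As)))).
    rewrite He in *. simpl eprod.
    refine (der_eqE _ _ _ _ (E_prodR [] _ _ _ _ _)). reflexivity. apply HY.
    refine (der_eqE _ _ _ _ (E_bangW [] _ [S] _ _)). reflexivity. apply E_ax.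
    refine (der_eqE _ _ _ _ (E_prodR [_] _ _ _ _ IH)). reflexivity.
    apply (E_bangR [piq q A]). simpl. rewrite Nat.eqb_refl. apply E_overR.
    refine (der_eqE _ _ _ _ (E_oneL [_] [] _ _)). reflexivity.
    refine (der_eqE _ _ _ _ (E_prodR [_] [] _ _ _ _)). reflexivity.
    apply E_ax. apply E_one.
Qed.
Ltac leq := simpl; rewrite <- ?app_assoc; simpl; rewrite <- ?app_assoc; simpl;
  rewrite <- ?app_assoc; simpl; reflexivity.

Lemma der_wf G C : derF true G C -> monefree G = true /\ fonefree C = true.
Proof.
  induction 1; try discriminate;
  match goal with H : wf _ _ _ |- _ => apply H; reflexivity end.
Qed.

Ltac wft := let Hm := fresh in intro Hm;
  match goal with HW : _ = true -> _ |- _ => destruct (HW Hm) as (?&?&?&?&?&?) end;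
  repeat match goal with x := _ |- _ => subst x end;
  unfold monefree, Zf in *; simpl;
  repeat progress (rewrite ?forallb_app; simpl); split;
  repeat (apply andb_true_intro; split); try assumption; try reflexivity.

Section P2.
Variables (m : bool) (s q : nat) (A : formula) (L1 L2 D1 D2 : meta) (C : formula).
Let Z := Zf q A.
Let P1 := Bang (Over (Over (Var s) (Var s)) (Bang Z)).
Let Lst := TF (Bang (Over (Over (Var s) (Var s)) (Dia (Dia (Var q))))).
Let QQ := TB [TB [TF (Var q)]].
Let Xf := Prod (Bang A) (Dia (Dia (Var q))).
Hypothesis Hw : m = true -> forallb tonefree L1 = true /\ forallb tonefree L2 = true
  /\ forallb tonefree D1 = true /\ forallb tonefree D2 = true /\ fonefree A = true /\ fonefree C = true.

Lemma part2 :
  derF m (L1 ++ TF P1 :: TF (Bang Z) :: L2 ++ [Lst; QQ] ++ D1 ++ TF A :: D2) C ->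
  derF m (L1 ++ TF P1 :: TF (Bang Z) :: L2 ++ [Lst; QQ] ++ D1 ++ D2) C.
Proof.
  intro Hd.
  assert (HW : m = true -> forallb tonefree L1 = true /\ forallb tonefree L2 = true
  /\ forallb tonefree D1 = true /\ forallb tonefree D2 = true /\ fonefree A = true /\ fonefree C = true) by exact Hw.
  refine (der_eq _ _ _ _ _ ((F_bangP1 m Hole [] Z (L1 ++ [TF P1]) (L2 ++ Lst :: QQ :: D1 ++ D2) _ _ _))).
  { leq. }
  { wft. }
  refine (der_eq _ _ _ _ _ ((F_bangC m Hole Z (L1 ++ TF P1 :: L2 ++ [Lst]) [TF (Var q)] (D1 ++ D2) _ _ _ _))).
  { leq. }
  { wft. }
  { intros _; discriminate. }
  refine (der_eq _ _ _ _ _ ((F_cut m [TB [TF (Bang Z); TF (Var q)]] Xf Hole (TF (Bang Z) :: (L1 ++ TF P1 :: L2 ++ [Lst])) (D1 ++ D2) _ _ _ _))).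
  { leq. }
  { wft. }
  { refine (der_eq _ _ _ _ _ ((F_cut m [TF (Bang Z); TF (Var q)] (BoxInv Xf) (InBr [] Hole []) [] [] _ _ _ _))).
    { reflexivity. }
    { wft. }
    { refine (der_eq _ _ _ _ _ ((F_bangL m Hole [] Z [TF (Var q)] _ _ _))). reflexivity.
      { wft. }
      refine (der_eq _ _ _ _ _ ((F_overL m [TF (Var q)] (Var q) Hole [] (BoxInv Xf) [] _ _ _ _))).
      reflexivity.
      { wft. }
      apply F_ax. { wft. }
      apply F_ax. { wft. } }
    refine (der_eq _ _ _ _ _ ((F_boxinvL m Hole [] Xf [] _ _ _))). reflexivity.
    { wft. }
    apply F_ax. { wft. } }
  refine (der_eq _ _ _ _ _ ((F_prodL m Hole (TF (Bang Z) :: (L1 ++ TF P1 :: L2 ++ [Lst])) (Bang A) (Dia (Dia (Var q))) (D1 ++ D2) _ _ _))).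
  { leq. }
  { wft. }
  refine (der_eq _ _ _ _ _ ((F_diaL m Hole (TF (Bang Z) :: (L1 ++ TF P1 :: L2 ++ [Lst]) ++ [TF (Bang A)]) (Dia (Var q)) (D1 ++ D2) _ _ _))).
  { leq. }
  { wft. }
  refine (der_eq _ _ _ _ _ ((F_diaL m (InBr (TF (Bang Z) :: (L1 ++ TF P1 :: L2 ++ [Lst]) ++ [TF (Bang A)]) Hole (D1 ++ D2)) [] (Var q) [] _ _ _))).
  { leq. }
  { wft. }
  refine (der_eq _ _ _ _ _ ((F_bangP2 m Hole (TF (Bang Z) :: (L1 ++ TF P1 :: L2 ++ [Lst])) A (QQ :: D1) D2 _ _ _))).
  { leq. }
  { wft. }
  refine (der_eq _ _ _ _ _ ((F_bangL m Hole (TF (Bang Z) :: (L1 ++ TF P1 :: L2 ++ [Lst]) ++ QQ :: D1) A D2 _ _ _))).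
  { leq. }
  { wft. }
  refine (der_eq _ _ _ _ _ ((F_bangP2 m Hole [] Z (L1 ++ [TF P1]) (L2 ++ Lst :: QQ :: D1 ++ TF A :: D2) _ _ _))).
  { leq. }
  { wft. }
  refine (der_eq _ _ _ _ _ Hd). leq.
Qed.
End P2.

Theorem proposition8 (s q : nat) (As : list formula) (m : bool) :
  s <> q ->
  Forall (lambek_noq q) As ->
  derF m (Phi s q As ++ [TF (Var s)]) (Var s) /\
  (forall A, In A As ->
     forall (D1 D2 : meta) (C : formula),
       derF m (Phi s q As ++ D1 ++ TF A :: D2) C ->
       derF m (Phi s q As ++ D1 ++ D2) C) /\
  derE (map (fun A => EBang (piq q A)) As) (eprod (piq_meta q (Phi s q As))).
Proof.
  intros Hsq HF. split; [apply part1; exact HF|]. split; [|apply part3].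
  intros A HA D1 D2 C Hd.
  destruct (in_split _ _ HA) as (As1 & As2 & ->).
  set (pr := fun A => [TF (Bang (Over (Over (Var s) (Var s)) (Bang (Zf q A)))); TF (Bang (Zf q A))]).
  assert (HP : Phi s q (As1 ++ A :: As2) =
    concat (map pr As1) ++ TF (Bang (Over (Over (Var s) (Var s)) (Bang (Zf q A)))) :: TF (Bang (Zf q A))
      :: concat (map pr As2) ++ [TF (Bang (Over (Over (Var s) (Var s)) (Dia (Dia (Var q))))); TB [TB [TF (Var q)]]]).
  { unfold Phi. rewrite map_app, concat_app. simpl. rewrite <- app_assoc. reflexivity. }
  rewrite HP in *.
  refine (der_eq _ _ _ _ _ (part2 m s q A (concat (map pr As1)) (concat (map pr As2)) D1 D2 C _ _)).
  leq.
  2:{ refine (der_eq _ _ _ _ _ Hd). leq. }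
  intro Hm; subst m. apply der_wf in Hd. destruct Hd as [Hd HC].
  unfold monefree in Hd. rewrite !forallb_app in Hd. simpl in Hd.
  rewrite forallb_app in Hd. simpl in Hd.
  repeat rewrite andb_true_iff in Hd. unfold Zf in Hd. simpl in Hd.
  repeat rewrite andb_true_iff in Hd.
  intuition.
Qed.
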